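(* Consider the district heating network optimal control problem $\mathcal{OCP}_T(x_0)$ described in the context, where the functions $d$, $r$, $p$ are bounded on $[0,\infty)$. Suppose $\mathcal{OCP}_T(x_0)$ exhibits a time-varying exact turnpike with respect to some $\bar z\in Z^{1,1}([0,\infty),\mathrm{int}(\mathcal Z))$ (an infinite-horizon pair satisfying the dynamics and input constraints). If $\bar z$ is bounded, then $\mathcal{OCP}_T(x_0)$ is strictly dissipative with respect to $\bar z$, and this holds for every $\alpha$ of class $\mathcal K$.
   Context: Network model: $\mathcal{G}=(\mathcal{V},\mathcal{E})$ is a connected directed graph with vertices $\mathcal V=\{v_1,\dots,v_n\}$, $n\ge 2$; an edge $e=(u,v)$, $u\ne v$, is oriented in the direction of water flow and carries a constant mass flow $q_e>0$. Each vertex has a heat loss coefficient $\kappa_v>0$ (masses and heat capacity normalized to $1$, ambient temperature $0$). $A_L$ is the weighted flow Laplacian of $\mathcal G$ with weights $q_e$, and $A=-A_L-\mathrm{diag}([\kappa_v]_{v\in\mathcal V})$. There are $m$ producers $\mathcal P\subset\mathcal V$ and $w$ consumers $\mathcal D\subset\mathcal V\setminus\mathcal P$; $B\in\mathbb{R}^{n\times m}$ has $(B)_{ij}=1$ if $v_i$ is the $j$-th producer and $0$ otherwise, and $E\in\mathbb{R}^{n\times w}$ analogously for consumers. Dynamics: $\dot x=Ax+Bu+Ed(t)$, $x(0)=x_0\in\mathcal X_0$, $\mathcal X_0\subset\mathbb{R}^n$ compact. Inputs lie in the box $\mathcal U=\prod_{i=1}^m[(u_{\min})_i,(u_{\max})_i]\subset\mathbb{R}^m_{\ge0}$;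 $\mathcal Z=\mathbb{R}^n\times\mathcal U$. Stage cost $\ell(\tau,x,u)=\tfrac12x^\top Qx+u^\top Sx+x^\top r(\tau)+u^\top p(\tau)$ with $Q$ symmetric, $S\in\mathbb{R}^{m\times n}$, $r:[0,\infty)\to\mathbb{R}^n$, $p:[0,\infty)\to\mathbb{R}^m$. $\mathcal{OCP}_T(x_0)$: minimize $\int_0^T\ell(\tau,x(\tau),u(\tau))d\tau$ over $u\in L^1([0,T],\mathcal U)$ subject to the dynamics; optimal pairs are $z_T^\star(\cdot;x_0)=(x_T^\star,u_T^\star)$. $Z^{1,1}(I,\mathcal R_1\times\mathcal R_2)$ denotes pairs $(x,u)$ with $x\in W^{1,1}$, $u\in L^1$ on $I$. Strict dissipativity: with $\ell_{\bar z}(\tau,z)=\ell(\tau,z)-\ell(\tau,\bar z(\tau))$, $\mathcal{OCP}_T(x_0)$ is strictly dissipative with respect to $\bar z$ (for a given class-$\mathcal K$ function $\alpha$, i.e. continuous, monotonically increasing, $\alpha(0)=0$) if there exists a storage function $\mathcal S:\mathbb{R}\times\mathbb{R}^n\to\mathbb{R}_{\ge s}$, $s\ge0$, such that for all $x_0\in\mathcal X_0$, $T\ge0$ and along all optimal pairs: $\mathcal S(T,x_T^\star(T))-\mathcal S(0,x_0)\le\int_0^T\big(-\alpha(\|z_T^\star(\tau,x_0)-\bar z(\tau)\|)+\ell_{\bar z}(\tau,z_T^\star(\tau,x_0))\big)d\tau$. Exact turnpike: with $\Theta_T(\varepsilon)=\{\tau\in[0,T]:\|z_T^\star(\tau,x_0)-\bar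 z(\tau)\|>\varepsilon\}$, the problem exhibits a time-varying exact turnpike with respect to $\bar z$ if there is $\nu:[0,\infty)\to[0,\infty)$ such that for all $x_0\in\mathcal X_0$, all $T>0$ and all optimal $u_T^\star$, $\mu(\Theta_T(\varepsilon))\le\nu(\varepsilon)<\infty$ for all $\varepsilon\ge0$, in particular for $\varepsilon=0$ ($\mu$ Lebesgue measure). *)

(* Defs.v *)
From HB Require Import structures.
From mathcomp Require Import all_boot all_order all_algebra.
From mathcomp Require Import all_classical all_reals all_analysis.
Set Implicit Arguments. Unset Strict Implicit. Unset Printing Implicit Defensive.
Import Order.TTheory GRing.Theory Num.Theory.
Import numFieldNormedType.Exports.
Local Open Scope classical_set_scope.
Local Open Scope ring_scope.

Section DHN.
Variable R : realType.
Local Notation leb := (@lebesgue_measure R).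

(* Vertices are 'I_n; the edge set is a set of ordered pairs (u,v), oriented in
   the direction of flow; q u v is the mass flow on the edge (u,v). *)
Definition valid_network (n : nat) (Ed : {set 'I_n * 'I_n}) (q : 'I_n -> 'I_n -> R) :=
  [/\ (2 <= n)%N,
      (forall u v, (u, v) \in Ed -> u != v),
      (forall u v, (u, v) \in Ed -> 0 < q u v) &
      (forall u v, connect (fun a b => ((a, b) \in Ed) || ((b, a) \in Ed)) u v)].

Definition flow_laplacian n (Ed : {set 'I_n * 'I_n}) (q : 'I_n -> 'I_n -> R) : 'M[R]_n :=
  \matrix_(i, j)
    (if i == j then \sum_(k < n | (k, i) \in Ed) q k i
     else - ((if (j, i) \in Ed then q j i else 0))).

Definition sysA n Ed q (kappa : 'I_n -> R) : 'M[R]_n :=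
  - flow_laplacian Ed q - diag_mx (\row_i kappa i).

Definition incid n m (f : 'I_m -> 'I_n) : 'M[R]_(n, m) :=
  \matrix_(i, j) (if f j == i then 1 else 0).

Definition itv0 (T : R) : set R := [set t | 0 <= t <= T].

Definition vint k (D : set R) (f : R -> 'cV[R]_k) : 'cV[R]_k :=
  \col_i Rintegral leb D (fun t => f t i ord0).

Definition vintegrable k (D : set R) (f : R -> 'cV[R]_k) :=
  forall i, leb.-integrable D (fun t => (f t i ord0)%:E).

Definition vmeasurable k (D : set R) (f : R -> 'cV[R]_k) :=
  forall i, measurable_fun D (fun t => f t i ord0).

Definition vbounded k (D : set R) (f : R -> 'cV[R]_k) :=
  exists M : R, forall t, D t -> forall i, `|f t i ord0| <= M.

Definition znorm n m (x : 'cV[R]_n) (u : 'cV[R]_m) : R :=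
  Num.sqrt (\sum_i (x i ord0) ^+ 2 + \sum_j (u j ord0) ^+ 2).

Definition in_box m (umin umax u : 'cV[R]_m) :=
  forall j, umin j ord0 <= u j ord0 <= umax j ord0.
Definition in_open_box m (umin umax u : 'cV[R]_m) :=
  forall j, umin j ord0 < u j ord0 < umax j ord0.

Definition classK (alpha : R -> R) :=
  [/\ {within [set t | 0 <= t], continuous alpha},
      (forall a b, 0 <= a -> a < b -> alpha a < alpha b) &
      alpha 0 = 0].

Section OCP.
Variables (n m w : nat).
Variables (A : 'M[R]_n) (B : 'M[R]_(n, m)) (E : 'M[R]_(n, w)).
Variable d : R -> 'cV[R]_w.
Variables umin umax : 'cV[R]_m.
Variable ell : R -> 'cV[R]_n -> 'cV[R]_m -> R.

Definition rhs (x : R -> 'cV[R]_n) (u : R -> 'cV[R]_m) (t : R) : 'cV[R]_n :=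
  A *m x t + B *m u t + E *m d t.

(* (x,u) in Z^{1,1}([0,T], R^n x U) solving the dynamics with x(0) = x0:
   u measurable (and L^1) on [0,T] with values in U, and x absolutely continuous
   given by the integral (Caratheodory) form of the ODE. *)
Definition admissible (T : R) (x0 : 'cV[R]_n) (x : R -> 'cV[R]_n) (u : R -> 'cV[R]_m) :=
  [/\ vmeasurable (itv0 T) u,
      vintegrable (itv0 T) u,
      (forall t, itv0 T t -> in_box umin umax (u t)),
      vintegrable (itv0 T) (rhs x u) &
      (forall t, itv0 T t -> x t = x0 + vint (itv0 T `&` [set s | s <= t]) (rhs x u))].

Definition cost (T : R) (x : R -> 'cV[R]_n) (u : R -> 'cV[R]_m) : \bar R :=
  (\int[leb]_(t in itv0 T) (ell t (x t) (u t))%:E)%E.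

Definition optimal_pair (T : R) (x0 : 'cV[R]_n) x u :=
  admissible T x0 x u /\
  forall x' u', admissible T x0 x' u' -> (cost T x u <= cost T x' u')%E.

(* infinite horizon pair in Z^{1,1}_loc([0,oo), int Z) satisfying the dynamics *)
Definition interior_trajectory (xb : R -> 'cV[R]_n) (ub : R -> 'cV[R]_m) :=
  [/\ forall T, 0 <= T -> vmeasurable (itv0 T) ub,
      forall T, 0 <= T -> vintegrable (itv0 T) ub,
      (forall t, 0 <= t -> in_open_box umin umax (ub t)),
      (forall T, 0 <= T -> vintegrable (itv0 T) (rhs xb ub)) &
      (forall t, 0 <= t -> xb t = xb 0 + vint (itv0 t) (rhs xb ub))].

Definition Theta (T eps : R) x u (xb : R -> 'cV[R]_n) (ub : R -> 'cV[R]_m) : set R :=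
  [set t | itv0 T t /\ eps < znorm (x t - xb t) (u t - ub t)].

Definition exact_turnpike (X0 : set 'cV[R]_n) xb ub :=
  exists nu : R -> R,
    forall x0, X0 x0 -> forall T, 0 < T -> forall x u, optimal_pair T x0 x u ->
      forall eps, 0 <= eps -> (leb (Theta T eps x u xb ub) <= (nu eps)%:E)%E.

Definition strictly_dissipative (X0 : set 'cV[R]_n) xb ub (alpha : R -> R) :=
  exists (S : R -> 'cV[R]_n -> R) (s : R),
    0 <= s /\ (forall t x, s <= S t x) /\
    forall x0, X0 x0 -> forall T, 0 <= T -> forall x u, optimal_pair T x0 x u ->
      ((S T (x T) - S 0 x0)%:E <=
        \int[leb]_(t in itv0 T)
          (- alpha (znorm (x t - xb t) (u t - ub t))
           + (ell t (x t) (u t) - ell t (xb t) (ub t)))%:E)%E.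

End OCP.

Definition stage_cost n m (Q : 'M[R]_n) (S : 'M[R]_(m, n)) (r : R -> 'cV[R]_n)
  (p : R -> 'cV[R]_m) (t : R) (x : 'cV[R]_n) (u : 'cV[R]_m) : R :=
  (2^-1 * (x^T *m Q *m x) ord0 ord0 + (u^T *m S *m x) ord0 ord0
   + (x^T *m r t) ord0 ord0 + (u^T *m p t) ord0 ord0).

End DHN.

(* Main.v *)
Require Import Defs.
From HB Require Import structures.
From mathcomp Require Import all_boot all_order all_algebra.
From mathcomp Require Import all_classical all_reals all_analysis.
Import Order.TTheory GRing.Theory Num.Theory.
Import numFieldNormedType.Exports.
Local Open Scope classical_set_scope.
Local Open Scope ring_scope.
From mathcomp Require Import measurable_realfun.
From mathcomp Require Import lra ring.

Section P1.
Variable R : realType.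
Local Notation leb := (@lebesgue_measure R).

Lemma leb_mono (A B : set R) : A `<=` B -> (leb A <= leb B)%E.
Proof.
move=> AB; rewrite /lebesgue_measure /lebesgue_stieltjes_measure /measure_extension.
exact: le_outer_measure.
Qed.

Lemma integrable_cst_itv (a b c : R) :
  leb.-integrable `]a, b] (EFin \o cst c).
Proof.
apply/integrableP; split; first exact/measurable_EFinP/measurable_cst.
rewrite (_ : (fun x => _) = cst `|c|%:E); last by apply/funext.
rewrite integral_cst//= lebesgue_measure_itv/=.
case: ifP => _; last by rewrite mule0 ltry.
by rewrite -EFinB -EFinM ltry.
Qed.

Lemma int_bound (g : R -> R) (a t c : R) : a <= t ->
  leb.-integrable `]a, t] (EFin \o g) ->
  (forall s, a < s <= t -> `|g s| <= c) ->
  `|\int[leb]_(s in `]a, t]) g s| <= c * (t - a).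
Proof.
move=> at0 ig gc.
apply: le_trans (le_normr_Rintegral _ ig) _ => //.
have -> : c * (t - a) = \int[leb]_(s in `]a, t]) c.
  rewrite Rintegral_cst //.
  have := lebesgue_measure_itv `]a, t]. rewrite /= => ->.
  rewrite lte_fin; case: (ltP a t) => [_|ta]; first by rewrite -EFinD.
  have -> : t = a by apply/le_anti; rewrite at0 ta.
  by rewrite subrr mulr0.
apply: (@le_Rintegral _ _ _ leb `]a, t] (fun s => `|g s|) (fun=> c)).
- by [].
- exact: integrable_norm.
- exact: integrable_cst_itv.
- by move=> s; rewrite /= in_itv /=; exact: gc.
Qed.

Lemma itv_split (a t : R) : 0 <= a <= t ->
  `[0, t]%classic = `[0, a]%classic `|` `]a, t]%classic :> set R.
Proof.
move=> /andP[a0 at0]; apply/seteqP; split => s /=; rewrite !in_itv /=.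
  case/andP=> s0 st; case: (leP s a) => sa; [left|right]; apply/andP; split => //.
case=> /andP[s0 sa]; apply/andP; split => //; first exact: le_trans sa at0.
  exact: le_trans a0 (ltW s0).
Qed.

Lemma Rint_split (g : R -> R) (a t : R) : 0 <= a <= t ->
  leb.-integrable `[0, t] (EFin \o g) ->
  \int[leb]_(s in `[0, t]) g s =
  \int[leb]_(s in `[0, a]) g s + \int[leb]_(s in `]a, t]) g s.
Proof.
move=> hat ig; rewrite (itv_split _ _ hat) in ig *.
apply: Rintegral_setU => //.
apply/disj_setPS => s [] /=; rewrite !in_itv /= => /andP[_ sa] /andP[as0 _].
by move: (lt_le_trans as0 sa); rewrite ltxx.
Qed.

Lemma sup_half (I : set R) (phi : R -> R) (a0 : R) :
  (exists K, forall t, I t -> phi t <= K) ->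
  (forall M, (forall t, I t -> phi t <= M) -> forall t, I t -> phi t <= a0 + M / 2) ->
  forall t, I t -> phi t <= 2 * a0.
Proof.
move=> [K hK] step t It.
set E := phi @` I.
have E0 : E !=set0 by exists (phi t); exists t.
have hs : has_sup E by split => //; exists K => _ [s Is <-]; exact: hK.
have ub : forall s, I s -> phi s <= sup E.
  by move=> s Is; apply: sup_upper_bound => //; exists s.
have := step _ ub.
move=> h2.
have : sup E <= a0 + sup E / 2 by apply: ge_sup => // _ [s Is <-]; exact: h2.
move=> h3; apply: le_trans (ub _ It) _.
lra.
Qed.


Definition gstep (L C H : R) : R := H / (Num.trunc (2 * L * H)).+1%:R.
Definition gbound (L C H B0 : R) : R :=
  iter (Num.trunc (2 * L * H)).+1 (fun b => 2 * (b + gstep L C H * C)) B0.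

Lemma gron (phi : R -> R) (T L C H : R) :
  0 <= L -> 0 <= C -> 0 < H ->
  (forall t, 0 <= phi t) ->
  (exists K, forall t, 0 <= t <= T -> phi t <= K) ->
  (forall a t M, 0 <= a -> a <= t -> t <= T ->
     (forall s, a <= s <= t -> phi s <= M) -> phi t <= phi a + (t - a) * (L * M + C)) ->
  forall B0 s0 t, 0 <= s0 -> s0 <= t -> t <= T -> t <= s0 + H -> phi s0 <= B0 ->
  phi t <= gbound L C H B0.
Proof.
move=> L0 C0 H0 phi0 [K hK] hstep B0 s0 t s00 s0t tT tH ps0.
rewrite /gbound.
set k := Num.trunc (2 * L * H).
set h := gstep L C H.
have k1 : 0 < k.+1%:R :> R by rewrite ltr0n.
have h0 : 0 <= h by rewrite /h /gstep divr_ge0 // ltW.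
have hk : h * k.+1%:R = H by rewrite /h /gstep mulfVK // gt_eqF.
have hL : L * h <= 2^-1.
  have : 2 * L * H < k.+1%:R by rewrite /k; apply: truncnS_gt.
  rewrite -hk => hh.
  have : 2 * L * h <= 1.
    nra.
  lra.
set f := (fun b => 2 * (b + h * C)).
have B00 : 0 <= B0 := le_trans (phi0 s0) ps0.
have beta0 : forall j, 0 <= iter j f B0.
  elim=> [|j IH] //=; rewrite /f; apply: mulr_ge0 => //; apply: addr_ge0 => //.
  exact: mulr_ge0.
have Q : forall j, forall t, s0 <= t -> t <= s0 + j%:R * h -> t <= T ->
    phi t <= iter j f B0.
  elim=> [|j IH] t' s0t' t'j t'T /=.
    by rewrite mul0r addr0 in t'j; have -> : t' = s0 by apply/le_anti; rewrite t'j s0t'.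
  have fge : iter j f B0 <= f (iter j f B0).
    rewrite /f; have := beta0 j; have : 0 <= h * C by exact: mulr_ge0.
    lra.
  have [t'le|t'gt] := leP t' (s0 + j%:R * h).
    exact: le_trans (IH _ s0t' t'le t'T) fge.
  set a := s0 + j%:R * h.
  have jh0 : 0 <= j%:R * h by apply: mulr_ge0.
  have s0a : s0 <= a by rewrite /a lerDl.
  have aT : a <= T by apply: le_trans (ltW t'gt) t'T.
  have pa := IH a s0a (lexx _) aT.
  have ta : t' - a <= h.
    move: t'j; rewrite -/a /a -addn1 natrD mulrDl mul1r; lra.
  have := @sup_half [set s | a <= s <= t'] phi (phi a + h * C).
  move=> /(_ _ _ t') H1.
  have : phi t' <= 2 * (phi a + h * C).
    apply: H1; last by rewrite /= (ltW t'gt) lexx.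
    - exists K => s /andP[as0 st']; apply: hK; apply/andP; split.
        exact: le_trans s00 (le_trans s0a as0).
      exact: le_trans st' t'T.
    - move=> M hM s /andP[as0 st'].
      have M0 : 0 <= M by apply: le_trans (phi0 a) (hM a _); rewrite /= lexx (ltW t'gt).
      have hs := hstep a s M (le_trans s00 s0a) as0 (le_trans st' t'T).
      have : phi s <= phi a + (s - a) * (L * M + C).
        apply: hs => s' /andP[as' s's]; apply: hM; rewrite /= as' /=.
        exact: le_trans s's st'.
      have sah : s - a <= h by lra.
      have LMC : 0 <= L * M + C by apply: addr_ge0 => //; exact: mulr_ge0.
      have e1 : (s - a) * (L * M + C) <= h * (L * M + C) by apply: ler_wpM2r.
      have e2 : (L * h) * M <= 2^-1 * M by apply: ler_wpM2r.
      move=> hh; apply: le_trans hh _.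
      have eq : h * (L * M + C) = (L * h) * M + h * C by ring.
      lra.
  move=> hh; apply: le_trans hh _; rewrite /f /=.
  lra.
apply: (Q k.+1) => //.
by rewrite mulrC hk.
Qed.

End P1.

Import HBNNSimple.
Section P4.
Variable R : realType.
Local Notation leb := (@lebesgue_measure R).

Lemma int_lower (D Th : set R) (f : R -> R) (c : R) : 0 <= c ->
  (forall t, D t -> ~ Th t -> 0 <= f t) -> (forall t, D t -> - c <= f t) ->
  (- (c%:E * leb Th) <= \int[leb]_(t in D) (f t)%:E)%E.
Proof.
move=> c0 hout hin.
rewrite /integral.
set g := (fun t => (f t)%:E) \_ D.
set P := ereal_sup _.
set Nn := ereal_sup _.
have P0 : (0 <= P)%E.
  apply: ereal_sup_ubound; exists nnsfun0 => //; last exact: sintegral0.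
  by move=> x /=; rewrite funeposE le_max lexx orbT.
have Nle : (Nn <= c%:E * leb Th)%E.
  apply: ge_ereal_sup => _ [h hh <-].
  pose A := h @^-1` `]0, +oo[%classic.
  have mA : measurable A by apply: measurable_funPTI; exact: measurable_itv.
  have hpos : forall x, 0 < h x -> [/\ D x, Th x & h x <= c].
    move=> x hx0; have := hh x; rewrite funenegE /g /patch.
    case: ifPn => [/set_mem Dx|_]; last first.
      have p0 : (point : \bar R) = 0%E by [].
      by rewrite p0 oppe0 maxxx lee_fin leNgt hx0.
    rewrite -EFinN -fine_max// lee_fin le_max => /orP[/= hf|]; last by rewrite leNgt hx0.
    have [Thx|nThx] := pselect (Th x).
      by split => //; apply: le_trans hf _; rewrite lerNl hin.
    have := hout x Dx nThx; lra.
  have hA : forall x, h x <= c * \1_A x.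
    move=> x; have [hx0|hx0] := leP (h x) 0.
      by apply: le_trans hx0 _; apply: mulr_ge0 => //.
    have Ax : A x by rewrite /A /= in_itv /= hx0.
    rewrite indicE (mem_set Ax) /= mulr1.
    by case: (hpos x hx0).
  have ATh : A `<=` Th.
    by move=> x; rewrite /A /= in_itv /= andbT => /hpos[].
  rewrite -integralT_nnsfun.
  have H1 : (\int[leb]_x (h x)%:E <= \int[leb]_x (c * \1_A x)%:E)%E.
    apply: ge0_le_integral => //.
    - by move=> x _; rewrite lee_fin.
    - exact/measurable_EFinP.
    - apply/measurable_EFinP; apply: measurable_funM => //; exact: measurable_indic.
    - by move=> x _; rewrite lee_fin.
  apply: le_trans H1 _.
  rewrite (_ : (fun x => (c * \1_A x)%:E) = fun x => (c%:E * (\1_A x)%:E)%E); last first.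
    by apply/funext => x; rewrite EFinM.
  rewrite ge0_integralZl //; last first.
    apply/measurable_EFinP; exact: measurable_indic.
  rewrite integral_indic // setIT.
  apply: lee_wpmul2l; first by rewrite lee_fin.
  exact: leb_mono.
have := leeB P0 Nle; rewrite add0e; exact.
Qed.
End P4.

Set Implicit Arguments. Unset Strict Implicit.
Section P3.
Variable R : realType.

Definition nv k (v : 'cV[R]_k) : R := \sum_i `|v i ord0|.
Definition mxs a b (M : 'M[R]_(a, b)) : R := \sum_i \sum_j `|M i j|.

Lemma nv_ge0 k (v : 'cV[R]_k) : 0 <= nv v.
Proof. by apply: sumr_ge0 => i _. Qed.

Lemma mxs_ge0 a b (M : 'M[R]_(a, b)) : 0 <= mxs M.
Proof. by apply: sumr_ge0 => i _; apply: sumr_ge0. Qed.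

Lemma le_sum_one (I : finType) (F : I -> R) i : (forall j, 0 <= F j) -> F i <= \sum_j F j.
Proof.
move=> F0; rewrite (bigD1 i) //= lerDl; exact: sumr_ge0.
Qed.

Lemma le_nv k (v : 'cV[R]_k) i : `|v i ord0| <= nv v.
Proof. by apply: (@le_sum_one _ (fun j => `|v j ord0|)). Qed.

Lemma le_mxs a b (M : 'M[R]_(a, b)) i j : `|M i j| <= mxs M.
Proof.
apply: le_trans (@le_sum_one _ (fun j => `|M i j|) j _) _ => //.
apply: (@le_sum_one _ (fun i => \sum_j `|M i j|)) => i'; exact: sumr_ge0.
Qed.

Lemma mulmx_bound a b (M : 'M[R]_(a, b)) (v : 'cV[R]_b) i :
  `|(M *m v) i ord0| <= mxs M * nv v.
Proof.
rewrite mxE; apply: le_trans (ler_norm_sum _ _ _) _.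
rewrite /nv mulr_sumr; apply: ler_sum => j _.
rewrite normrM; apply: ler_wpM2r => //; exact: le_mxs.
Qed.

Lemma nvD k (v w : 'cV[R]_k) : nv (v + w) <= nv v + nv w.
Proof.
rewrite /nv -big_split /=; apply: ler_sum => i _; rewrite mxE; exact: ler_normD.
Qed.

Lemma nvB k (v w : 'cV[R]_k) : nv (v - w) <= nv v + nv w.
Proof.
rewrite /nv -big_split /=; apply: ler_sum => i _; rewrite !mxE.
by apply: le_trans (ler_normD _ _) _; rewrite normrN.
Qed.

Lemma quad_bound a b (x : 'cV[R]_a) (M : 'M[R]_(a, b)) (y : 'cV[R]_b) :
  `|(x^T *m M *m y) ord0 ord0| <= mxs M * nv x * nv y.
Proof.
rewrite mxE; apply: le_trans (ler_norm_sum _ _ _) _.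
rewrite [_ * nv y]mulr_sumr; apply: ler_sum => j _.
rewrite normrM; apply: ler_wpM2r => //.
rewrite mxE; apply: le_trans (ler_norm_sum _ _ _) _.
rewrite /nv mulr_sumr; apply: ler_sum => i _.
rewrite mxE normrM mulrC; apply: ler_wpM2r => //; exact: le_mxs.
Qed.

Lemma dot_bound a (x y : 'cV[R]_a) :
  `|(x^T *m y) ord0 ord0| <= nv x * nv y.
Proof.
rewrite mxE; apply: le_trans (ler_norm_sum _ _ _) _.
rewrite /nv mulr_suml; apply: ler_sum => i _.
rewrite mxE normrM; apply: ler_wpM2l => //; exact: le_nv.
Qed.

Lemma sq_le_nv k (v : 'cV[R]_k) : \sum_i (v i ord0) ^+ 2 <= nv v ^+ 2.
Proof.
rewrite expr2 /nv mulr_suml; apply: ler_sum => i _.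
rewrite -real_normK ?num_real // expr2; apply: ler_wpM2l => //; exact: le_nv.
Qed.

Lemma znorm_le n m (x : 'cV[R]_n) (u : 'cV[R]_m) : znorm x u <= nv x + nv u.
Proof.
rewrite /znorm.
have h0 : 0 <= nv x + nv u by apply: addr_ge0; exact: nv_ge0.
rewrite -(ger0_norm h0) -sqrtr_sqr ler_wsqrtr //.
have := sq_le_nv x; have := sq_le_nv u.
have := nv_ge0 x; have := nv_ge0 u; nra.
Qed.

Lemma znorm_ge0 n m (x : 'cV[R]_n) (u : 'cV[R]_m) : 0 <= znorm x u.
Proof. exact: sqrtr_ge0. Qed.

Lemma entry_le_znorm n m (x : 'cV[R]_n) (u : 'cV[R]_m) i : `|x i ord0| <= znorm x u.
Proof.
rewrite /znorm -sqrtr_sqr ler_wsqrtr //.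
apply: le_trans (@le_sum_one _ (fun j => x j ord0 ^+ 2) i _) _ => //.
  by move=> j; exact: sqr_ge0.
rewrite lerDl; apply: sumr_ge0 => j _; exact: sqr_ge0.
Qed.

Lemma entry_le_znorm2 n m (x : 'cV[R]_n) (u : 'cV[R]_m) j : `|u j ord0| <= znorm x u.
Proof.
rewrite /znorm -sqrtr_sqr ler_wsqrtr //.
apply: le_trans (@le_sum_one _ (fun j => u j ord0 ^+ 2) j _) _ => //.
  by move=> j'; exact: sqr_ge0.
rewrite lerDr; apply: sumr_ge0 => i _; exact: sqr_ge0.
Qed.

Lemma nv_le_znorm n m (x : 'cV[R]_n) (u : 'cV[R]_m) : nv x <= n%:R * znorm x u.
Proof.
have -> : n%:R * znorm x u = \sum_(i < n) znorm x u by rewrite sumr_const card_ord mulr_natl.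
apply: ler_sum => i _.
exact: entry_le_znorm.
Qed.

Lemma nv_le_znorm2 n m (x : 'cV[R]_n) (u : 'cV[R]_m) : nv u <= m%:R * znorm x u.
Proof.
have -> : m%:R * znorm x u = \sum_(i < m) znorm x u by rewrite sumr_const card_ord mulr_natl.
apply: ler_sum => i _.
exact: entry_le_znorm2.
Qed.

Lemma znorm0 n m (x : 'cV[R]_n) (u : 'cV[R]_m) : znorm x u <= 0 -> x = 0 /\ u = 0.
Proof.
move=> z0; split; apply/matrixP => i j; rewrite !mxE (ord1 j); apply/eqP; rewrite -normr_le0.
  exact: le_trans (entry_le_znorm x u i) z0.
exact: le_trans (entry_le_znorm2 x u i) z0.
Qed.

Lemma stage_bound n m (Q : 'M[R]_n) (S : 'M[R]_(m, n)) r p t x u :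
  `|stage_cost Q S r p t x u| <=
    mxs Q * nv x * nv x + mxs S * nv u * nv x + nv x * nv (r t) + nv u * nv (p t).
Proof.
rewrite /stage_cost.
have h1 := quad_bound x Q x.
have h2 := quad_bound u S x.
have h3 := dot_bound x (r t).
have h4 := dot_bound u (p t).
set a := (x^T *m Q *m x) ord0 ord0 in h1 *.
set b := (u^T *m S *m x) ord0 ord0 in h2 *.
set c := (x^T *m r t) ord0 ord0 in h3 *.
set e := (u^T *m p t) ord0 ord0 in h4 *.
have n1 : `|2^-1 * a| <= `|a|.
  rewrite normrM ger0_norm //; have := normr_ge0 a; lra.
have := ler_normD (2^-1 * a + b + c) e; have := ler_normD (2^-1 * a + b) c.
have := ler_normD (2^-1 * a) b; lra.
Qed.

End P3.

Lemma entry_le_norm (R : realType) n (x : 'cV[R]_n) i : `|x i ord0| <= `|x|.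
Proof.
have -> : `|x| = mx_norm x by [].
rewrite mx_normrE.
exact: (le_bigmax _ (fun ij : 'I_n * 'I_1 => `|x ij.1 ij.2|) (i, ord0)). 
Qed.
Lemma cpt_bnd (R : realType) n (X0 : set 'cV[R]_n) : compact X0 -> exists M, 0 <= M /\ forall x, X0 x -> `|x| <= M.
Proof.
move=> /compact_bounded [M [_ hM]].
exists (`|M| + 1); split; first by rewrite addr_ge0.
apply: (hM (`|M| + 1)).
have := ler_norm M; lra.
Qed.

Set Implicit Arguments. Unset Strict Implicit.

Section M1.
Variable R : realType.
Local Notation leb := (@lebesgue_measure R).

Lemma itv0E (T : R) : itv0 T = `[0, T]%classic.
Proof. by apply/seteqP; split => s /=; rewrite in_itv. Qed.

Lemma itv0IE (T t : R) : t <= T -> itv0 T `&` [set s | s <= t] = `[0, t]%classic.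
Proof.
move=> tT; apply/seteqP; split => s /=; rewrite in_itv /=.
  by case=> /andP[-> _] ->.
by case/andP=> s0 st; split => //; apply/andP; split => //; exact: le_trans st tT.
Qed.

Variables (n m w : nat) (A : 'M[R]_n) (B : 'M[R]_(n, m)) (E : 'M[R]_(n, w)).
Variables (d : R -> 'cV[R]_w) (umin umax : 'cV[R]_m).

Lemma traj_facts (T : R) x0 x u (Ku Kd : R) :
  0 <= T -> admissible A B E d umin umax T x0 x u ->
  (forall t, 0 <= t <= T -> nv (u t) <= Ku) ->
  (forall t, 0 <= t <= T -> nv (d t) <= Kd) ->
  [/\ nv (x 0) = nv x0,
      (exists K, forall t, 0 <= t <= T -> nv (x t) <= K) &
      (forall a t M, 0 <= a -> a <= t -> t <= T ->
        (forall s, a <= s <= t -> nv (x s) <= M) ->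
        nv (x t) <= nv (x a) + (t - a) * (n%:R * mxs A * M + n%:R * (mxs B * Ku + mxs E * Kd)))].
Proof.
move=> T0 [_ _ _ hint hx] hu hd.
set g := fun i s => rhs A B E d x u s i ord0.
have F1 : forall t, 0 <= t <= T -> forall i,
    x t i ord0 = x0 i ord0 + \int[leb]_(s in `[0, t]) g i s.
  move=> t /andP[t0 tT] i.
  rewrite hx; last by rewrite /itv0 /= t0 tT.
  by rewrite itv0IE // !mxE.
have F2 : forall i, leb.-integrable `[0, T] (EFin \o g i).
  by move=> i; have := hint i; rewrite itv0E.
have F2t : forall t i, 0 <= t <= T -> leb.-integrable `[0, t] (EFin \o g i).
  move=> t i /andP[t0 tT]; apply: integrableS (F2 i) => //.
  by move=> s /=; rewrite !in_itv /= => /andP[-> st] /=; exact: le_trans st tT.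
split.
- rewrite /nv; apply: eq_bigr => i _.
  rewrite F1 ?lexx ?T0 // set_itv1 Rintegral_set1 addr0 //.
- exists (nv x0 + \sum_i \int[leb]_(s in `[0, T]) `|g i s|) => t htT.
  rewrite /nv -big_split /=; apply: ler_sum => i _.
  rewrite F1 //; apply: le_trans (ler_normD _ _) _; apply: lerD => //.
  case/andP: (htT) => t0 tT.
  apply: le_trans (le_normr_Rintegral _ (F2t t i htT)) _ => //.
  rewrite (@Rint_split _ (fun s => `|g i s|) t T); last exact: integrable_norm.
    rewrite lerDl; apply: Rintegral_ge0 => s _; exact: normr_ge0.
  by rewrite t0 tT.
- move=> a t M a0 at0 tT hM.
  have hat : 0 <= a <= t by rewrite a0 at0.
  have htT : 0 <= t <= T by rewrite (le_trans a0 at0) tT.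
  have haT : 0 <= a <= T by rewrite a0 (le_trans at0 tT).
  set c := mxs A * M + (mxs B * Ku + mxs E * Kd).
  have hg : forall i s, a < s <= t -> `|g i s| <= c.
    move=> i s /andP[as0 st].
    have hs : 0 <= s <= T by rewrite (le_trans a0 (ltW as0)) (le_trans st tT).
    have -> : g i s = (A *m x s) i ord0 + (B *m u s) i ord0 + (E *m d s) i ord0.
      by rewrite /g /rhs [LHS]mxE [X in X + _ = _]mxE.
    have h1 := mulmx_bound A (x s) i.
    have h2 := mulmx_bound B (u s) i.
    have h3 := mulmx_bound E (d s) i.
    have e1 : mxs A * nv (x s) <= mxs A * M.
      by apply: ler_wpM2l; [exact: mxs_ge0|apply: hM; rewrite (ltW as0) st].
    have e2 : mxs B * nv (u s) <= mxs B * Ku by apply: ler_wpM2l; [exact: mxs_ge0|exact: hu].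
    have e3 : mxs E * nv (d s) <= mxs E * Kd by apply: ler_wpM2l; [exact: mxs_ge0|exact: hd].
    have t1 := ler_normD ((A *m x s) i ord0 + (B *m u s) i ord0) ((E *m d s) i ord0).
    have t2 := ler_normD ((A *m x s) i ord0) ((B *m u s) i ord0).
    rewrite /c; lra.
  have hxi : forall i, `|x t i ord0| <= `|x a i ord0| + c * (t - a).
    move=> i; rewrite (F1 t htT) (F1 a haT) (@Rint_split _ (g i) a t hat (F2t t i htT)) addrA.
    apply: le_trans (ler_normD _ _) _; apply: lerD => //.
    apply: int_bound => //; last by move=> s; exact: hg.
    apply: integrableS (F2t t i htT) => //.
    by move=> s /=; rewrite !in_itv /= => /andP[as0 ->]; rewrite andbT (le_trans a0 (ltW as0)).
  rewrite /nv; apply: le_trans (ler_sum _ (fun i _ => hxi i)) _.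
  rewrite big_split /= sumr_const card_ord lerD2l -mulr_natl le_eqVlt; apply/orP; left.
  by apply/eqP; rewrite /c; ring.
Qed.

End M1.

Section M2.
Variable R : realType.

Lemma kl_mono (q s a X b U r1 Rr p1 Pp : R) : 0 <= q -> 0 <= s ->
  0 <= a <= X -> 0 <= b <= U -> 0 <= r1 <= Rr -> 0 <= p1 <= Pp ->
  q * a * a + s * b * a + a * r1 + b * p1 <= q * X * X + s * U * X + X * Rr + U * Pp.
Proof.
move=> q0 s0 /andP[a0 aX] /andP[b0 bU] /andP[r0 rR] /andP[p0 pP].
have X0 : 0 <= X := le_trans a0 aX.
have U0 : 0 <= U := le_trans b0 bU.
have h1 : q * a * a <= q * X * X.
  by rewrite -!mulrA; apply: ler_wpM2l => //; apply: ler_pM.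
have h2 : s * b * a <= s * U * X.
  by rewrite -!mulrA; apply: ler_wpM2l => //; apply: ler_pM.
have h3 : a * r1 <= X * Rr by apply: ler_pM.
have h4 : b * p1 <= U * Pp by apply: ler_pM.
lra.
Qed.

Lemma gbound_ge0 (L C H B0 : R) : 0 <= L -> 0 <= C -> 0 < H -> 0 <= B0 ->
  0 <= gbound _ L C H B0.
Proof.
move=> L0 C0 H0 B00; rewrite /gbound.
have h0 : 0 <= gstep _ L C H by rewrite /gstep divr_ge0 // ltW.
elim: (Num.trunc _).+1 => [|j IH] //=.
apply: mulr_ge0 => //; apply: addr_ge0 => //; exact: mulr_ge0.
Qed.

Lemma classK_ge0 (alpha : R -> R) z : classK alpha -> 0 <= z -> 0 <= alpha z.
Proof.
case=> _ amono a0 z0; rewrite -a0.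
have [->|zn0] := eqVneq z 0; first by rewrite lexx.
by apply: ltW; apply: amono => //; rewrite lt_neqAle eq_sym zn0 z0.
Qed.

Lemma classK_mono (alpha : R -> R) z K : classK alpha -> 0 <= z -> z <= K -> alpha z <= alpha K.
Proof.
case=> _ amono a0 z0 zK.
have [->|zn0] := eqVneq z K; first by rewrite lexx.
by apply: ltW; apply: amono => //; rewrite lt_neqAle zn0 zK.
Qed.

End M2.

Unset Implicit Arguments.

Theorem proposition3 (R : realType) (n m w : nat)
  (Ed : {set 'I_n * 'I_n}) (q : 'I_n -> 'I_n -> R) (kappa : 'I_n -> R)
  (prod : 'I_m -> 'I_n) (cons : 'I_w -> 'I_n)
  (X0 : set 'cV[R]_n) (umin umax : 'cV[R]_m)
  (Q : 'M[R]_n) (S : 'M[R]_(m, n))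
  (d : R -> 'cV[R]_w) (r : R -> 'cV[R]_n) (p : R -> 'cV[R]_m)
  (xb : R -> 'cV[R]_n) (ub : R -> 'cV[R]_m) :
  valid_network Ed q ->
  (forall v, 0 < kappa v) ->
  injective prod -> injective cons ->
  (forall i j, prod i != cons j) ->
  compact X0 ->
  (forall j, 0 <= umin j ord0 <= umax j ord0) ->
  Q^T = Q ->
  (* d, r, p bounded (and measurable) on [0, oo) *)
  vbounded [set t | 0 <= t] d -> vbounded [set t | 0 <= t] r ->
  vbounded [set t | 0 <= t] p ->
  vmeasurable [set t | 0 <= t] d -> vmeasurable [set t | 0 <= t] r ->
  vmeasurable [set t | 0 <= t] p ->
  let A := sysA Ed q kappa in
  let B := incid R prod in
  let E := incid R cons in
  let ell := stage_cost Q S r p in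
  interior_trajectory A B E d umin umax xb ub ->
  exact_turnpike A B E d umin umax ell X0 xb ub ->
  (exists M : R, forall t, 0 <= t -> znorm (xb t) (ub t) <= M) ->
  forall alpha : R -> R, classK alpha ->
    strictly_dissipative A B E d umin umax ell X0 xb ub alpha.
Proof.
move=> _ _ _ _ _ cX0 humin _ [Md hd] [Mr hr] [Mp hp] _ _ _ A B E ell _ [nu hnu] [Mz hMz] alpha hal.
have [MX [MX0 hMX]] := cpt_bnd cX0.
pose N := `|nu 0|.
pose H := N + 1.
have H0 : 0 < H by rewrite /H /N; have := normr_ge0 (nu 0); lra.
pose Ku := nv umax.
pose Kd := w%:R * `|Md|.
pose Kxb := n%:R * `|Mz|.
pose Kub := m%:R * `|Mz|.
pose L := n%:R * mxs A.
pose C := n%:R * (mxs B * Ku + mxs E * Kd).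
pose B0 := n%:R * MX + Kxb.
pose Kx := gbound _ L C H B0.
pose Kz := (Kx + Kxb) + (Ku + Kub).
pose Kl := fun X U => mxs Q * X * X + mxs S * U * X + X * (n%:R * `|Mr|) + U * (m%:R * `|Mp|).
pose c := alpha Kz + Kl Kx Ku + Kl Kxb Kub.
have Ku0 : 0 <= Ku by exact: nv_ge0.
have Kd0 : 0 <= Kd by rewrite /Kd mulr_ge0.
have Kxb0 : 0 <= Kxb by rewrite /Kxb mulr_ge0.
have Kub0 : 0 <= Kub by rewrite /Kub mulr_ge0.
have L0 : 0 <= L by rewrite /L mulr_ge0 // mxs_ge0.
have C0 : 0 <= C.
  rewrite /C; apply: mulr_ge0 => //; apply: addr_ge0; apply: mulr_ge0 => //; exact: mxs_ge0.
have B00 : 0 <= B0 by rewrite /B0 addr_ge0 // mulr_ge0.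
have Kx0 : 0 <= Kx by apply: gbound_ge0.
have Kz0 : 0 <= Kz by rewrite /Kz !addr_ge0.
have Rr0 : 0 <= n%:R * `|Mr| :> R by rewrite mulr_ge0.
have Pp0 : 0 <= m%:R * `|Mp| :> R by rewrite mulr_ge0.
have Kl0 : forall X U, 0 <= X -> 0 <= U -> 0 <= Kl X U.
  move=> X U X0' U0'; rewrite /Kl.
  have hQ := mxs_ge0 Q; have hS := mxs_ge0 S.
  have e1 : 0 <= mxs Q * X * X by rewrite !mulr_ge0.
  have e2 : 0 <= mxs S * U * X by rewrite !mulr_ge0.
  have e3 : 0 <= X * (n%:R * `|Mr|) by rewrite !mulr_ge0.
  have e4 : 0 <= U * (m%:R * `|Mp|) by rewrite !mulr_ge0.
  lra.
have c0 : 0 <= c.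
  have := Kl0 _ _ Kx0 Ku0; have := Kl0 _ _ Kxb0 Kub0; have := classK_ge0 hal Kz0.
  rewrite /c; lra.
have hnvu : forall v, in_box umin umax v -> nv v <= Ku.
  move=> v hv; rewrite /Ku /nv; apply: ler_sum => j _.
  have := hv j; have := humin j; move=> /andP[h1 _] /andP[h2 h3].
  rewrite !ger0_norm; lra.
have hnvd : forall t, 0 <= t -> nv (d t) <= Kd.
  move=> t t0; rewrite /Kd /nv.
  have -> : w%:R * `|Md| = \sum_(i < w) `|Md| by rewrite sumr_const card_ord mulr_natl.
  apply: ler_sum => i _; apply: le_trans (hd t t0 i) (ler_norm _).
have hnvr : forall t, 0 <= t -> nv (r t) <= n%:R * `|Mr|.
  move=> t t0; rewrite /nv.
  have -> : n%:R * `|Mr| = \sum_(i < n) `|Mr| by rewrite sumr_const card_ord mulr_natl.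
  apply: ler_sum => i _; apply: le_trans (hr t t0 i) (ler_norm _).
have hnvp : forall t, 0 <= t -> nv (p t) <= m%:R * `|Mp|.
  move=> t t0; rewrite /nv.
  have -> : m%:R * `|Mp| = \sum_(i < m) `|Mp| by rewrite sumr_const card_ord mulr_natl.
  apply: ler_sum => i _; apply: le_trans (hp t t0 i) (ler_norm _).
have hnxb : forall t, 0 <= t -> nv (xb t) <= Kxb.
  move=> t t0; apply: le_trans (nv_le_znorm (xb t) (ub t)) _.
  apply: ler_wpM2l => //; exact: le_trans (hMz t t0) (ler_norm _).
have hnub : forall t, 0 <= t -> nv (ub t) <= Kub.
  move=> t t0; apply: le_trans (nv_le_znorm2 (xb t) (ub t)) _.
  apply: ler_wpM2l => //; exact: le_trans (hMz t t0) (ler_norm _).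
have hnx0 : forall x0, X0 x0 -> nv x0 <= n%:R * MX.
  move=> x0 hx0; rewrite /nv.
  have -> : n%:R * MX = \sum_(i < n) MX by rewrite sumr_const card_ord mulr_natl.
  apply: ler_sum => i _; apply: le_trans (entry_le_norm x0 i) (hMX _ hx0).
have hellg : forall t x u X U, 0 <= t -> nv x <= X -> nv u <= U -> `|ell t x u| <= Kl X U.
  move=> t x u X U t0 hx hu; apply: le_trans (stage_bound Q S r p t x u) _.
  rewrite /Kl; apply: kl_mono; try exact: mxs_ge0.
  - by rewrite nv_ge0 hx.
  - by rewrite nv_ge0 hu.
  - by rewrite nv_ge0 hnvr.
  - by rewrite nv_ge0 hnvp.
exists (fun t y => if t == 0 then c * N else 0), 0.
split => //; split.
  by move=> t y; case: ifP => // _; apply: mulr_ge0 => //; exact: normr_ge0.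
move=> x0 hx0 T T0 x u hopt.
have hadm := hopt.1.
case: (hadm) => [_ _ hbox _ _].
have hu : forall t, 0 <= t <= T -> nv (u t) <= Ku.
  by move=> t ht; apply: hnvu; apply: hbox.
have hdT : forall t, 0 <= t <= T -> nv (d t) <= Kd.
  by move=> t /andP[t0 _]; apply: hnvd.
have [hx00 [K hK] hstep] := traj_facts T0 hadm hu hdT.
have hzero : forall t, 0 <= t <= T -> ~ Theta T 0 x u xb ub t ->
    znorm (x t - xb t) (u t - ub t) = 0.
  move=> t ht nTh; apply/le_anti; rewrite znorm_ge0 andbT leNgt; apply/negP => hlt.
  by apply: nTh; split.
have hbx : forall t, 0 <= t <= T -> nv (x t) <= Kx.
  move=> t /andP[t0 tT].
  have gr := @gron R (fun s => nv (x s)) T L C H L0 C0 H0 (fun s => nv_ge0 (x s))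
    (ex_intro _ K hK) hstep.
  case: (leP t H) => [tH|Ht].
    apply: (gr B0 0 t) => //; first by rewrite add0r.
    by rewrite hx00; apply: le_trans (hnx0 _ hx0) _; rewrite /B0 lerDl.
  have Tpos : 0 < T by apply: lt_le_trans H0 (le_trans (ltW Ht) tT).
  have [s [hs nTh]] : exists s, (t - H <= s <= t) /\ ~ Theta T 0 x u xb ub s.
    apply: contrapT => hne.
    have sub : `[t - H, t]%classic `<=` Theta T 0 x u xb ub.
      move=> s hs; apply: contrapT => nTh; apply: hne; exists s; split => //.
    have h1 := leb_mono _ _ _ sub.
    have h2 := hnu x0 hx0 T Tpos x u hopt 0 (lexx 0).
    have h3 := lebesgue_measure_itv `[t - H, t].
    rewrite /= in h3.
    rewrite h3 lte_fin in h1.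
    have hlt : t - H < t by lra.
    rewrite hlt -EFinB in h1.
    have := le_trans h1 h2; rewrite lee_fin.
    have := ler_norm (nu 0); rewrite /H /N; lra.
  case/andP: hs => hs1 hs2.
  have s0 : 0 <= s by lra.
  have sT : s <= T by lra.
  have hs0T : 0 <= s <= T by rewrite s0 sT.
  have hz := hzero s hs0T nTh.
  have hz' : znorm (x s - xb s) (u s - ub s) <= 0 by rewrite hz.
  have [hxs _] := znorm0 hz'.
  apply: (gr B0 s t) => //; first by lra.
  move/subr0_eq: hxs => ->.
  by apply: le_trans (hnxb s s0) _; rewrite /B0 lerDr mulr_ge0.
have hout : forall t, itv0 T t -> ~ Theta T 0 x u xb ub t ->
    0 <= - alpha (znorm (x t - xb t) (u t - ub t)) + (ell t (x t) (u t) - ell t (xb t) (ub t)).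
  move=> t ht nTh.
  have hz := hzero t ht nTh.
  have hz' : znorm (x t - xb t) (u t - ub t) <= 0 by rewrite hz.
  have [/subr0_eq hxt /subr0_eq hut] := znorm0 hz'.
  rewrite hz; case: (hal) => _ _ ->.
  by rewrite hxt hut subrr oppr0 add0r.
have hin : forall t, itv0 T t ->
    - c <= - alpha (znorm (x t - xb t) (u t - ub t)) + (ell t (x t) (u t) - ell t (xb t) (ub t)).
  move=> t ht; have t0 : 0 <= t by case/andP: ht.
  have e1 := hellg t (x t) (u t) Kx Ku t0 (hbx t ht) (hu t ht).
  have e2 := hellg t (xb t) (ub t) Kxb Kub t0 (hnxb t t0) (hnub t t0).
  have hzt : znorm (x t - xb t) (u t - ub t) <= Kz.
    apply: le_trans (znorm_le _ _) _.
    have := nvB (x t) (xb t); have := nvB (u t) (ub t).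
    have := hbx t ht; have := hu t ht; have := hnxb t t0; have := hnub t t0.
    rewrite /Kz; lra.
  have e3 := classK_mono hal (znorm_ge0 _ _) hzt.
  have := ler_norm (- ell t (x t) (u t)); rewrite normrN.
  have := ler_norm (ell t (xb t) (ub t)).
  rewrite /c; lra.
have key := int_lower _ _ _ _ _ c0 hout hin.
have [T0e|Tn0] := eqVneq T 0.
  rewrite T0e eqxx subrr.
  have hTh : lebesgue_measure (Theta T 0 x u xb ub) = 0%E.
    apply/le_anti; rewrite measure_ge0 andbT.
    apply: le_trans (leb_mono _ _ `[0, 0]%classic _) _.
      by move=> t []; rewrite T0e itv0E.
    by rewrite (lebesgue_measure_itv `[0, 0]) /= ltxx.
  by move: key; rewrite hTh mule0 oppe0 T0e.
have Tpos : 0 < T by rewrite lt_neqAle eq_sym Tn0 T0.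
rewrite eqxx sub0r.
apply: le_trans _ key.
rewrite EFinN leeN2 EFinM; apply: lee_wpmul2l; first by rewrite lee_fin.
apply: le_trans (hnu x0 hx0 T Tpos x u hopt 0 (lexx 0)) _.
by rewrite lee_fin /N ler_norm.
Qed.
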